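(* Let $T\in\mathbb{N}$, $\beta_1,\dots,\beta_T\in(0,1)$, $\alpha_t=1-\beta_t$, $\bar\alpha_t=\prod_{i=1}^t\alpha_i$, and let $\sigma_t\ge0$ with $1-\bar\alpha_{t-1}-\sigma_t^2\ge0$ for $t=2,\dots,T$. Fix vectors $\bm y_0,\bm f\in\mathbb{R}^d$ (here $\bm f=f_\phi(\bm c)$ is the output of a fixed pre-trained regressor at the covariate $\bm c$). Define a joint distribution of $\bm y_1,\dots,\bm y_T$ given $\bm y_0$ by $$p(\bm y_T\mid\bm y_0)=\mathcal{N}\big(\sqrt{\bar\alpha_T}\bm y_0+(1-\sqrt{\bar\alpha_T})\bm f,\ (1-\bar\alpha_T)\mathbf{I}\big)$$ and, for $t=T,\dots,2$, $p(\bm y_{t-1}\mid\bm y_t,\bm y_0)=\mathcal{N}(\bm\mu(\bm y_0,\bm y_t),\sigma_t^2\mathbf{I})$ with $$\bm\mu(\bm y_0,\bm y_t)=\sqrt{\bar\alpha_{t-1}}\bm y_0+(1-\sqrt{\bar\alpha_{t-1}})\bm f+\sqrt{1-\bar\alpha_{t-1}-\sigma_t^2}\,\frac{\bm y_t-\big(\sqrt{\bar\alpha_t}\bm y_0+(1-\sqrt{\bar\alpha_t})\bm f\big)}{\sqrt{1-\bar\alpha_t}}.$$ Then for every $t=1,\dots,T$, $$p(\bm y_t\mid\bm y_0)=\mathcal{N}\big(\sqrt{\bar\alpha_t}\bm y_0+(1-\sqrt{\bar\alpha_t})\bm f,\ (1-\bar\alpha_t)\mathbf{I}\big).$$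
   Context: This is the CARD (classification and regression diffusion) model written in the DDIM framework, where the diffusion interpolates between the data distribution and $\mathcal{N}(f_\phi(\bm c),\mathbf{I})$. *)

(* Defs.v *)
From HB Require Import structures.
From mathcomp Require Import all_boot all_order all_algebra.
From mathcomp Require Import all_classical all_reals all_analysis.
Set Implicit Arguments. Unset Strict Implicit. Unset Printing Implicit Defensive.
Import Order.TTheory GRing.Theory Num.Theory.
Local Open Scope classical_set_scope.
Local Open Scope ring_scope.

Section card.
Context {R : realType}.

(* integral of a nonnegative function h against the standard Gaussian N(0, I) on R^n,
   defined as the n-fold product of the standard normal N(0,1) (iterated integral) *)
Fixpoint std_gauss_int (n : nat) : (n.-tuple R -> \bar R) -> \bar R :=
  match n with
  | 0 => fun h => h [tuple]
  | n'.+1 => fun h =>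
      (\int[normal_prob 0 1]_z std_gauss_int (fun t : n'.-tuple R => h (cons_tuple z t)))%E
  end.

(* integral of g against N(m, s^2 I) on R^d (s >= 0), the image of N(0,I) by z |-> m + s z *)
Definition gauss_int (d : nat) (m : d.-tuple R) (s : R) (g : d.-tuple R -> \bar R) : \bar R :=
  std_gauss_int (fun z : d.-tuple R => g [tuple tnth m i + s * tnth z i | i < d]).

Definition gauss_prob (d : nat) (m : d.-tuple R) (s : R) (A : set (d.-tuple R)) : \bar R :=
  gauss_int m s (fun y => (\1_A y)%:E).

Definition abar (beta : nat -> R) (t : nat) : R := \prod_(1 <= i < t.+1) (1 - beta i).

Definition card_mean (beta : nat -> R) (d : nat) (y0 f : d.-tuple R) (t : nat) : d.-tuple R :=
  [tuple Num.sqrt (abar beta t) * tnth y0 i + (1 - Num.sqrt (abar beta t)) * tnth f i | i < d].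

Definition card_mu (beta sigma : nat -> R) (d : nat) (y0 f : d.-tuple R) (t : nat)
    (yt : d.-tuple R) : d.-tuple R :=
  [tuple tnth (card_mean beta y0 f t.-1) i
     + Num.sqrt (1 - abar beta t.-1 - sigma t ^+ 2)
       * ((tnth yt i - tnth (card_mean beta y0 f t) i) / Num.sqrt (1 - abar beta t)) | i < d].

(* card_marg_int T k g = E[g(y_{T-k}) | y0] under the joint distribution
   p(y_T|y0) prod_{t=T..2} p(y_{t-1}|y_t,y0)  (for k <= T-1) *)
Fixpoint card_marg_int (beta sigma : nat -> R) (d : nat) (y0 f : d.-tuple R) (T : nat)
    (k : nat) (g : d.-tuple R -> \bar R) : \bar R :=
  match k with
  | 0 => gauss_int (card_mean beta y0 f T) (Num.sqrt (1 - abar beta T)) g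
  | k'.+1 => card_marg_int beta sigma y0 f T k'
      (fun yt => gauss_int (card_mu beta sigma y0 f (T - k')%N yt) (sigma (T - k')%N) g)
  end.

Definition card_marg (beta sigma : nat -> R) (d : nat) (y0 f : d.-tuple R) (T t : nat)
    (A : set (d.-tuple R)) : \bar R :=
  card_marg_int beta sigma y0 f T (T - t)%N (fun y => (\1_A y)%:E).

End card.

(* Main.v *)
Require Import Defs.
From HB Require Import structures.
From mathcomp Require Import all_boot all_order all_algebra.
From mathcomp Require Import all_classical all_reals all_analysis.
From mathcomp Require Import ring lra zify measurable_realfun.
Import Order.TTheory GRing.Theory Num.Theory.
Local Open Scope classical_set_scope.
Local Open Scope ring_scope.
Lemma emM d (T : measurableType d) (R : realType) (f g : T -> \bar R) :
  measurable_fun setT f -> measurable_fun setT g ->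
  measurable_fun setT (fun x => (f x * g x)%E).
Proof. by move=> mf mg; exact: (emeasurable_funM mf mg). Qed.

Section density.
Local Open Scope ereal_scope.
Context d (T : measurableType d) (R : realType).
Variables (mu nu : {measure set T -> \bar R}) (g : T -> R).
Hypothesis mg : measurable_fun setT g.
Hypothesis g0 : forall x, (0 <= g x)%R.
Hypothesis nuE : forall A, measurable A -> nu A = \int[mu]_(x in A) (g x)%:E.

Let dens_indic E : measurable E ->
  \int[nu]_x (\1_E x)%:E = \int[mu]_x ((g x)%:E * (\1_E x)%:E).
Proof.
move=> mE; rewrite integral_indic// setIT nuE// integral_mkcond.
apply: eq_integral => x _; rewrite patchE indicE.
by case: ifPn => _; rewrite ?mule1 ?mule0.
Qed.

Import HBNNSimple.

Let dens_nnsfun (h : {nnsfun T >-> R}) :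
  \int[nu]_x (h x)%:E = \int[mu]_x ((g x)%:E * (h x)%:E).
Proof.
under [LHS]eq_integral do rewrite fimfunE -fsumEFin//.
rewrite [LHS]ge0_integral_fsum//; last 2 first.
  - by move=> r; exact/measurable_EFinP/measurableT_comp.
  - by move=> n x _; rewrite EFinM nnfun_muleindic_ge0.
under [RHS]eq_integral.
  move=> x xD; rewrite fimfunE -fsumEFin// ge0_mule_fsumr; last first.
    by move=> r; rewrite EFinM nnfun_muleindic_ge0.
  over.
rewrite [RHS]ge0_integral_fsum//; last 2 first.
  - move=> r; apply/measurable_EFinP; apply: measurable_funM => //.
    by do 2 apply/measurableT_comp => //.
  - by move=> n x _; apply: mule_ge0; [rewrite lee_fin|exact: nnfun_muleindic_ge0].
apply: eq_fsbigr => r _.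
rewrite integralZl_indic_nnsfun//.
have [r0|r0] := leP 0%R r; last first.
  rewrite (preimage_nnfun0 _ r0) indic0 /=.
  rewrite integral0 mule0.
  by rewrite integral0_eq// => x _ /=; rewrite mulr0 mule0.
rewrite dens_indic//.
rewrite -ge0_integralZl//.
- by apply: eq_integral => x _; rewrite EFinM muleCA.
- apply: emM; first exact/measurable_EFinP.
  by apply/measurable_EFinP/measurable_indic; apply: measurable_funPTI; exact: measurable_set1.
- by move=> x _; rewrite mule_ge0// lee_fin.
Qed.

Lemma integral_density (f : T -> \bar R) :
  measurable_fun setT f -> (forall x, 0 <= f x) ->
  \int[nu]_x f x = \int[mu]_x ((g x)%:E * f x).
Proof.
move=> mf f0; pose f_ := nnsfun_approx measurableT mf.
transitivity (limn (fun n => \int[nu]_x (f_ n x)%:E)).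
  rewrite -monotone_convergence//=.
  - apply: eq_integral => x /[!inE] xD; apply/esym/cvg_lim => //=.
    exact: cvg_nnsfun_approx.
  - by move=> n; apply: measurableT_comp => //.
  - by move=> n x _; rewrite lee_fin.
  - by move=> x _ a b ab; rewrite lee_fin//; exact/lefP/nd_nnsfun_approx.
transitivity (limn (fun n => \int[mu]_x ((g x)%:E * (f_ n x)%:E))).
  by congr (limn _); apply/funext => n; rewrite dens_nnsfun.
rewrite -monotone_convergence//=.
- apply: eq_integral => x _; apply/cvg_lim => //=.
  by apply: cvgeZl => //; exact: cvg_nnsfun_approx.
- move=> n; apply: emM; first exact/measurable_EFinP.
  exact/measurable_EFinP.
- by move=> n x _; rewrite mule_ge0// lee_fin.
- move=> x _ a b ab; apply: lee_wpmul2l; first by rewrite lee_fin.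
  by rewrite lee_fin; exact/lefP/nd_nnsfun_approx.
Qed.

End density.
Section cov.
Context {R : realType}.
Local Notation mu := (@lebesgue_measure R).
Definition aff (c e : R) := fun x : R => c * x + e.

Lemma affine_measurable (c e : R) : measurable_fun setT (aff c e).
Proof. by apply: measurable_funD => //; exact: measurable_funM. Qed.

Lemma aff_preimage (c e a b : R) (c0 : 0 < c) :
  aff c e @^-1` `]a, b]%classic = `](a - e) / c, (b - e) / c]%classic.
Proof.
apply/seteqP; split => x /=; rewrite !in_itv /= /aff.
- move=> /andP[h1 h2]; apply/andP; split.
    by rewrite ltr_pdivrMr// mulrC ltrBlDr.
  by rewrite ler_pdivlMr// mulrC lerBrDr.
- move=> /andP[h1 h2]; apply/andP; split.
    by move: h1; rewrite ltr_pdivrMr// mulrC ltrBlDr.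
  by move: h2; rewrite ler_pdivlMr// mulrC lerBrDr.
Qed.

Lemma pushforward_affine (c e : R) (c0 : 0 < c) (A : set R) : measurable A ->
  mu A = (c%:E * pushforward mu (aff c e) A)%E.
Proof.
move=> mA.
have := @lebesgue_measure_unique R (mscale (NngNum (ltW c0)) (pushforward mu (aff c e : _ -> measurableTypeR R))).
move/(_ (affine_measurable c e)) => H; rewrite H //.
move=> _ [[a b] _ <-]; change (mu `]a, b]%classic = (c%:E * mu (aff c e @^-1` `]a, b]%classic))%E); rewrite (aff_preimage c e a b c0).
rewrite !lebesgue_measure_itv /= !lte_fin ltr_pM2r ?invr_gt0//.
rewrite ltrD2r; case: ifPn => ab; last by rewrite mule0.
by rewrite -!EFinB -EFinM; congr EFin; field; rewrite gt_eqF.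
Qed.

Lemma integral_affine (c e : R) (c0 : 0 < c) (F : R -> \bar R) :
  measurable_fun setT F -> (forall x, (0 <= F x)%E) ->
  (\int[mu]_x F x = c%:E * \int[mu]_x F (aff c e x))%E.
Proof.
move=> mF F0; have maff := affine_measurable c e.
rewrite (@eq_measure_integral _ _ _ setT (mscale (NngNum (ltW c0)) (pushforward mu (aff c e : _ -> measurableTypeR R)))); last first.
  by move=> A mA _; exact: pushforward_affine.
rewrite ge0_integral_mscale //=.
rewrite ge0_integral_pushforward//.
Qed.

End cov.
Section gauss.
Context {R : realType}.
Lemma peakM (s1 s2 s3 s4 : R) : s1 ^+ 2 * s2 ^+ 2 = s3 ^+ 2 * s4 ^+ 2 ->
  normal_peak s1 * normal_peak s2 = normal_peak s3 * normal_peak s4.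
Proof.
move=> h; rewrite /normal_peak -!invfM.
have p0 : forall s : R, 0 <= s ^+ 2 * pi *+ 2.
  move=> s; apply: mulrn_wge0; apply: mulr_ge0; [exact: sqr_ge0 | exact: pi_ge0].
rewrite -(sqrtrM _ (p0 s1)) -(sqrtrM _ (p0 s3)).
have E : forall u v : R, u ^+ 2 * pi *+ 2 * (v ^+ 2 * pi *+ 2) = u ^+ 2 * v ^+ 2 * (pi *+ 2) ^+ 2.
  move=> u v; rewrite -!mulrnAr expr2; ring.
by rewrite !E h.
Qed.
End gauss.
Section gauss2.
Context {R : realType}.
Lemma npdfE (m s x : R) : s != 0 ->
  normal_pdf m s x = normal_peak s * expR (- (x - m) ^+ 2 / (s ^+ 2 *+ 2)).
Proof. by move=> s0; rewrite /normal_pdf (negbTE s0). Qed.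

Lemma pdf_scale (m s w : R) : 0 < s ->
  s * normal_pdf m s (s * w + m) = normal_pdf 0 1 w.
Proof.
move=> s0; rewrite !npdfE; last 2 first.
- exact: oner_neq0.
- by rewrite gt_eqF.
rewrite mulrA; congr (_ * _).
  rewrite /normal_peak; have := @pi_gt0 R; generalize (@pi R) => p p0.
  rewrite -!mulrnAr expr1n mul1r.
  rewrite (sqrtrM _ (sqr_ge0 s)) sqrtr_sqr (ger0_norm (ltW s0)) invfM mulrA.
  by rewrite divff ?mul1r // gt_eqF.
congr expR; rewrite -(mulr_natr (s ^+ 2)) -(mulr_natr (1 ^+ 2)) expr1n subr0 addrK.
by field; rewrite gt_eqF.
Qed.
End gauss2.
Section gauss3.
Context {R : realType}.
Local Notation mu := (@lebesgue_measure R).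

Lemma pdf_conv_pt (a b y z : R) : 0 < b ->
  normal_pdf 0 1 z * normal_pdf (a * z) b y =
  normal_pdf 0 (Num.sqrt (a ^+ 2 + b ^+ 2)) y *
  normal_pdf (a * y / (a ^+ 2 + b ^+ 2)) (b / Num.sqrt (a ^+ 2 + b ^+ 2)) z.
Proof.
move=> b0.
have q0 : 0 < a ^+ 2 + b ^+ 2 by rewrite ltr_wpDl ?sqr_ge0 ?exprn_gt0.
have r0 : 0 < Num.sqrt (a ^+ 2 + b ^+ 2) by rewrite sqrtr_gt0.
rewrite !npdfE; last 4 first.
- by rewrite gt_eqF// divr_gt0.
- by rewrite gt_eqF.
- by rewrite gt_eqF.
- exact: oner_neq0.
rewrite mulrACA [in RHS]mulrACA; congr (_ * _).
  apply: peakM; rewrite expr_div_n sqr_sqrtr ?ltW// expr1n mul1r.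
  by field; rewrite gt_eqF.
rewrite -!expRD; congr expR.
rewrite expr_div_n !sqr_sqrtr ?ltW// !mulr2n.
field; have b2 : 0 < b ^+ 2 by rewrite exprn_gt0.
by apply/and3P; split; apply: lt0r_neq0 => //; apply: addr_gt0.
Qed.

Lemma pdf_conv (a b y : R) : 0 < b ->
  (\int[mu]_z ((normal_pdf 0 1 z)%:E * (normal_pdf (a * z) b y)%:E) =
  (normal_pdf 0 (Num.sqrt (a ^+ 2 + b ^+ 2)) y)%:E)%E.
Proof.
move=> b0.
under eq_integral do rewrite -EFinM pdf_conv_pt// EFinM.
rewrite ge0_integralZl//.
- by rewrite integral_normal_pdf mule1.
- by apply/measurable_EFinP; exact: measurable_normal_pdf.
- by move=> z _; rewrite lee_fin normal_pdf_ge0.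
- by rewrite lee_fin normal_pdf_ge0.
Qed.
End gauss3.
Section conv.
Context {R : realType}.
Local Notation mu := (@lebesgue_measure R).
Local Notation N := (@normal_prob R 0 1).

Lemma integral_normal (m s : R) (f : R -> \bar R) :
  measurable_fun setT f -> (forall x, (0 <= f x)%E) ->
  (\int[normal_prob m s]_x f x = \int[mu]_x ((normal_pdf m s x)%:E * f x))%E.
Proof.
move=> mf f0; apply: integral_density => //.
- exact: measurable_normal_pdf.
- by move=> x; exact: normal_pdf_ge0.
Qed.

End conv.
Section conv2.
Context {R : realType}.
Local Notation mu := (@lebesgue_measure R).
Local Notation N := (@normal_prob R 0 1).

Lemma aff_normal (m s : R) (h : R -> \bar R) : 0 < s ->
  measurable_fun setT h -> (forall x, (0 <= h x)%E) ->
  (\int[mu]_x ((normal_pdf m s x)%:E * h x) =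
   \int[mu]_w ((normal_pdf 0 1 w)%:E * h (s * w + m)%R))%E.
Proof.
move=> s0 mh h0.
rewrite (@integral_affine _ s m s0 (fun x => (normal_pdf m s x)%:E * h x)%E); last 2 first.
- apply: emM => //; apply/measurable_EFinP; exact: measurable_normal_pdf.
- by move=> x; rewrite mule_ge0// lee_fin normal_pdf_ge0.
rewrite -ge0_integralZl//; last 3 first.
- apply: emM.
    by apply/measurable_EFinP; apply: measurableT_comp; [exact: measurable_normal_pdf|exact: affine_measurable].
  by apply: measurableT_comp => //; exact: affine_measurable.
- by move=> x _; rewrite mule_ge0// lee_fin normal_pdf_ge0.
- by rewrite lee_fin ltW.
apply: eq_integral => w _; rewrite /aff muleA -EFinM pdf_scale//.
Qed.

Lemma measurable_pdf2 (a b : R) : 0 < b ->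
  measurable_fun setT (fun zx : R * R => normal_pdf (a * zx.1) b zx.2).
Proof.
move=> b0.
rewrite (_ : (fun zx : R * R => _) = (fun zx => normal_peak b *
   expR (- (zx.2 - a * zx.1) ^+ 2 / (b ^+ 2 *+ 2)))); last first.
  by apply/funext => zx; rewrite npdfE// gt_eqF.
apply: measurable_funM => //; apply: measurableT_comp; first exact: measurable_expR.
apply: measurable_funM => //; apply: measurable_funN.
apply: measurable_funX; apply: measurable_funB; first exact: measurable_snd.
by apply: measurable_funM => //; exact: measurable_fst.
Qed.

End conv2.
Section conv3.
Context {R : realType}.
Local Notation mu := (@lebesgue_measure R).
Local Notation N := (@normal_prob R 0 1).

Lemma measurable_pdf_lin (a b x : R) : 0 < b ->
  measurable_fun setT (fun z : R => normal_pdf (a * z) b x).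
Proof. by move=> b0; have H := measurable_fun_pair1 x (@measurable_pdf2 R a b b0); exact: H. Qed.

Lemma conv1 (a b : R) (h : R -> \bar R) : 0 <= a -> 0 <= b ->
  measurable_fun setT h -> (forall x, (0 <= h x)%E) ->
  (\int[N]_z \int[N]_w h (a * z + b * w)%R =
   \int[N]_u h (Num.sqrt (a ^+ 2 + b ^+ 2) * u)%R)%E.
Proof.
move=> a0 b0 mh h0.
have [bz|bpos] : b = 0 \/ 0 < b.
  by move: b0; rewrite le_eqVlt => /orP[/eqP <-|->]; [left|right].
  subst b; rewrite expr0n addr0 sqrtr_sqr ger0_norm//.
  apply: eq_integral => z _.
  rewrite (eq_integral (fun _ => h (a * z)%R)); last by move=> w _; rewrite mul0r addr0.
  rewrite integral_cst// -[RHS]mule1; congr (_ * _)%E; exact: probability_setT.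
set r := Num.sqrt (a ^+ 2 + b ^+ 2).
have rpos : 0 < r by rewrite sqrtr_gt0 ltr_wpDl ?sqr_ge0 ?exprn_gt0.
pose F := (fun zx : R * R => (normal_pdf (a * zx.1) b zx.2)%:E * h zx.2)%E.
have mF : measurable_fun setT F.
  apply: emM; first by apply/measurable_EFinP; exact: measurable_pdf2.
  by apply: measurableT_comp => //; exact: measurable_snd.
have F0 : forall zx, (0 <= F zx)%E.
  by move=> zx; rewrite mule_ge0// lee_fin normal_pdf_ge0.
transitivity (\int[N]_z \int[mu]_x F (z, x))%E.
  apply: eq_integral => z _.
  rewrite integral_normal; last 2 first.
  - by apply: measurableT_comp => //; apply: measurable_funD => //; exact: measurable_funM.
  - by move=> w; exact: h0.
  rewrite /F /= [RHS](@aff_normal R (a * z) b h bpos mh h0).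
  by apply: eq_integral => w _; rewrite addrC.
rewrite integral_normal; last 2 first.
- exact: (@measurable_fun_fubini_tonelli_F _ _ _ _ _ mu F mF F0).
- by move=> z; apply: integral_ge0 => x _; exact: F0.
transitivity (\int[mu]_z \int[mu]_x ((normal_pdf 0 1 z)%:E * F (z, x)))%E.
  apply: eq_integral => z _; rewrite ge0_integralZl//.
  all: first [ by move=> x _; exact: F0 | by rewrite lee_fin normal_pdf_ge0
             | exact: (measurable_fun_pair2 z mF) | idtac].
have mG : measurable_fun setT (fun zx : R * R => ((normal_pdf 0 1 zx.1)%:E * F zx)%E).
  apply: (@emM _ _ _ (fun zx : R * R => (normal_pdf 0 1 zx.1)%:E) F) => //.
  apply/measurable_EFinP.
  exact: (measurableT_comp (measurable_normal_pdf 0 1) measurable_fst).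
have G0 : forall zx : R * R, (0 <= (normal_pdf 0 1 zx.1)%:E * F zx)%E.
  by move=> zx; rewrite mule_ge0// lee_fin normal_pdf_ge0.
transitivity (\int[mu]_x \int[mu]_z ((normal_pdf 0 1 z)%:E * F (z, x)))%E.
  exact: (@fubini_tonelli _ _ _ _ _ mu mu _ mG G0).
rewrite /= integral_normal; last 2 first.
- by apply: measurableT_comp => //; exact: measurable_funM.
- by move=> u; exact: h0.
transitivity (\int[mu]_w ((normal_pdf 0 1 w)%:E * h (r * w + 0)%R))%E; last first.
  by apply: eq_integral => w _; rewrite addr0.
rewrite -(@aff_normal R 0 r h rpos mh h0).
apply: eq_integral => x _.
rewrite /F /=.
under eq_integral do rewrite muleA.
rewrite ge0_integralZr//.
- by rewrite pdf_conv.
- apply: emM; apply/measurable_EFinP; first exact: measurable_normal_pdf.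
  exact: measurable_pdf_lin.
- by move=> z _; rewrite mule_ge0// lee_fin normal_pdf_ge0.
Qed.

End conv3.
Section sg.
Context {R : realType}.
Local Notation N := (@normal_prob R 0 1).

Lemma SG_ge0 n (h : n.-tuple R -> \bar R) : (forall t, 0 <= h t)%E ->
  (0 <= std_gauss_int h)%E.
Proof.
elim: n h => [|n IH] h h0 /=; first exact: h0.
by apply: integral_ge0 => z _; apply: IH => t; exact: h0.
Qed.

Lemma SG_ext n (h1 h2 : n.-tuple R -> \bar R) : (forall t, h1 t = h2 t) ->
  std_gauss_int h1 = std_gauss_int h2.
Proof. by move=> e; congr std_gauss_int; apply/funext. Qed.

Lemma measurable_pair_cons dX (X : measurableType dX) n :
  measurable_fun setT (fun q : (X * R) * n.-tuple R =>
    (q.1.1, [the n.+1.-tuple R of q.1.2 :: q.2])).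
Proof.
apply/measurable_fun_pairP; split.
  exact: (measurableT_comp measurable_fst measurable_fst).
apply: measurable_cons; last exact: measurable_snd.
exact: (measurableT_comp measurable_snd measurable_fst).
Qed.

Lemma measurable_SG n : forall dX (X : measurableType dX)
  (f : X -> n.-tuple R -> \bar R),
  measurable_fun setT (fun p : X * n.-tuple R => f p.1 p.2) ->
  (forall x t, 0 <= f x t)%E ->
  measurable_fun setT (fun x => std_gauss_int (f x)).
Proof.
elim: n => [|n IH] dX X f mf f0 /=.
  have H := measurable_fun_pair1 [tuple] mf; exact: H.
pose g := fun (p : X * R) (t : n.-tuple R) => f p.1 [tuple of p.2 :: t].
have mg : measurable_fun setT (fun q : (X * R) * n.-tuple R => g q.1 q.2).
  have H := measurableT_comp mf (@measurable_pair_cons _ X n); exact: H.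
have mG := IH _ _ g mg (fun p t => f0 _ _).
have G0 : forall p, (0 <= std_gauss_int (g p))%E.
  by move=> p; apply: SG_ge0 => t; exact: f0.
have H := @measurable_fun_fubini_tonelli_F _ _ _ _ _ N _ mG G0.
exact: H.
Qed.

End sg.
Section sg2.
Context {R : realType}.
Local Notation N := (@normal_prob R 0 1).

Lemma SG_swap n : forall (F : R -> n.-tuple R -> \bar R),
  measurable_fun setT (fun p : R * n.-tuple R => F p.1 p.2) ->
  (forall w t, 0 <= F w t)%E ->
  (\int[N]_w std_gauss_int (F w) = std_gauss_int (fun t => \int[N]_w F w t))%E.
Proof.
elim: n => [|n IH] F mF F0 /=; first by [].
pose H := fun (p : R * R) (t : n.-tuple R) => F p.1 [tuple of p.2 :: t].
have mH : measurable_fun setT (fun q : (R * R) * n.-tuple R => H q.1 q.2).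
  have K := measurableT_comp mF (@measurable_pair_cons _ _ R n); exact: K.
have mSG := @measurable_SG R n _ _ _ mH (fun p t => F0 _ _).
have SG0 : forall p, (0 <= std_gauss_int (H p))%E.
  by move=> p; apply: SG_ge0 => t; exact: F0.
transitivity (\int[N]_z \int[N]_w std_gauss_int (H (w, z)))%E.
  exact: (@fubini_tonelli _ _ _ _ _ N N (fun p => std_gauss_int (H p)) mSG SG0).
apply: eq_integral => z _.
apply: (IH (fun w t => F w [tuple of z :: t])); last by move=> w t; exact: F0.
have mc : measurable_fun setT (fun p : R * n.-tuple R => (p.1, [the n.+1.-tuple R of z :: p.2])).
  apply/measurable_fun_pairP; split; first exact: measurable_fst.
  by apply: measurable_cons => //; exact: measurable_snd.
have K := measurableT_comp mF mc; exact: K.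
Qed.

Lemma measurable_mktuple dX (X : measurableType dX) n (F : X -> 'I_n -> R) :
  (forall i, measurable_fun setT (fun x => F x i)) ->
  measurable_fun setT (fun x => [tuple F x i | i < n]).
Proof.
move=> mF; apply/measurable_fun_tnthP => i.
rewrite (_ : _ \o _ = fun x => F x i); first exact: mF.
by apply/funext => x /=; rewrite tnth_mktuple.
Qed.

End sg2.
Section sgconv.
Context {R : realType}.
Local Notation N := (@normal_prob R 0 1).

Lemma mktuple_cons n (f : 'I_n.+1 -> R) :
  [tuple f i | i < n.+1] = [tuple of f ord0 :: [tuple f (lift ord0 i) | i < n]].
Proof.
apply: eq_from_tnth => i; rewrite tnth_mktuple.
case: (unliftP ord0 i) => [j ->|->]; first by rewrite tnthS tnth_mktuple.
by rewrite tnth0.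
Qed.

Lemma mtn dX (X : measurableType dX) n (T : X -> n.-tuple R) (i : 'I_n) :
  measurable_fun setT T -> measurable_fun setT (fun x => tnth (T x) i).
Proof. by move=> mT; exact: (measurableT_comp (measurable_tnth i) mT). Qed.

Lemma mgcons dX (X : measurableType dX) n (g : n.+1.-tuple R -> \bar R)
  (P : X -> R) (Q : X -> 'I_n -> R) :
  measurable_fun setT g -> measurable_fun setT P ->
  (forall i, measurable_fun setT (fun x => Q x i)) ->
  measurable_fun setT (fun x => g [tuple of P x :: [tuple Q x i | i < n]]).
Proof.
move=> mg mP mQ; apply: (measurableT_comp mg).
by apply: measurable_cons => //; exact: measurable_mktuple.
Qed.

Variables (a b : R) (a0 : 0 <= a) (b0 : 0 <= b).
Let r := Num.sqrt (a ^+ 2 + b ^+ 2).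

Lemma SG_conv n : forall (mf : 'I_n -> R) (g : n.-tuple R -> \bar R),
  measurable_fun setT g -> (forall t, 0 <= g t)%E ->
  std_gauss_int (fun z : n.-tuple R => std_gauss_int (fun w : n.-tuple R =>
     g [tuple mf i + a * tnth z i + b * tnth w i | i < n])) =
  std_gauss_int (fun u : n.-tuple R => g [tuple mf i + r * tnth u i | i < n]).
Proof.
elim: n => [|n IH] mf g mg g0 /=.
  by congr g; apply: eq_from_tnth => -[m hm]; exfalso; rewrite ltn0 in hm.
pose mf' := fun i : 'I_n => mf (lift ord0 i).
pose G := fun (x : R) (v : n.-tuple R) => g [tuple of (mf ord0 + x) :: v].
transitivity (\int[N]_z1 std_gauss_int (fun z' : n.-tuple R => \int[N]_w1 std_gauss_int
   (fun w' : n.-tuple R => G (a * z1 + b * w1)%R [tuple (mf' i + a * tnth z' i + b * tnth w' i)%R | i < n])))%E.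
  apply: eq_integral => z1 _; apply: SG_ext => z'; apply: eq_integral => w1 _.
  apply: SG_ext => w'; rewrite /G mktuple_cons !tnth0.
  congr (g [tuple of _ :: _]); first by rewrite addrA.
  by apply: eq_from_tnth => i; rewrite !tnth_mktuple !tnthS.
have mfst2 : measurable_fun setT (fun q : (R * n.-tuple R) * n.-tuple R => q.1.1).
  exact: (measurableT_comp measurable_fst measurable_fst).
have msnd2 : measurable_fun setT (fun q : (R * n.-tuple R) * n.-tuple R => q.1.2).
  exact: (measurableT_comp measurable_snd measurable_fst).
transitivity (\int[N]_z1 \int[N]_w1 std_gauss_int (fun u' : n.-tuple R =>
   G (a * z1 + b * w1)%R [tuple (mf' i + r * tnth u' i)%R | i < n]))%E.
  apply: eq_integral => z1 _.
  transitivity (\int[N]_w1 std_gauss_int (fun z' : n.-tuple R => std_gauss_int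
   (fun w' : n.-tuple R => G (a * z1 + b * w1)%R [tuple (mf' i + a * tnth z' i + b * tnth w' i)%R | i < n])))%E.
    symmetry.
    apply: (@SG_swap R n (fun w1 z' => std_gauss_int
      (fun w' : n.-tuple R => G (a * z1 + b * w1)%R [tuple (mf' i + a * tnth z' i + b * tnth w' i)%R | i < n]))).
    + apply: (@measurable_SG R n _ (R * n.-tuple R)%type (fun p w' =>
          G (a * z1 + b * p.1)%R [tuple (mf' i + a * tnth p.2 i + b * tnth w' i)%R | i < n])).
        apply: mgcons => //.
          apply: measurable_funD => //; apply: measurable_funD => //.
          by apply: measurable_funM => //.
        move=> i; apply: measurable_funD.
          apply: measurable_funD => //; apply: measurable_funM => //.
          exact: mtn.
        apply: measurable_funM => //; apply: mtn; exact: measurable_snd.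
      by move=> p w'; exact: g0.
    + by move=> w1 z'; apply: SG_ge0 => w'; exact: g0.
  apply: eq_integral => w1 _.
  apply: (IH mf' (G (a * z1 + b * w1)%R)); last by move=> t; exact: g0.
  apply: (measurableT_comp mg); apply: measurable_cons => //.
transitivity (\int[N]_u1 std_gauss_int (fun u' : n.-tuple R =>
   G (r * u1)%R [tuple (mf' i + r * tnth u' i)%R | i < n]))%E.
  apply: (@conv1 R a b (fun x => std_gauss_int (fun u' : n.-tuple R =>
   G x [tuple (mf' i + r * tnth u' i)%R | i < n])) a0 b0).
  + apply: (@measurable_SG R n _ R (fun x u' =>
      G x [tuple (mf' i + r * tnth u' i)%R | i < n])); last by move=> x u'; exact: g0.
    apply: mgcons => //.
      by apply: measurable_funD => //; exact: measurable_fst.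
    move=> i; apply: measurable_funD => //; apply: measurable_funM => //.
    apply: mtn; exact: measurable_snd.
  + by move=> x; apply: SG_ge0 => u'; exact: g0.
apply: eq_integral => u1 _; apply: SG_ext => u'.
rewrite /G mktuple_cons !tnth0; congr (g [tuple of _ :: _]).
by apply: eq_from_tnth => i; rewrite !tnth_mktuple !tnthS.
Qed.

End sgconv.
Section final.
Context {R : realType}.

Lemma abar0 (beta : nat -> R) : abar beta 0 = 1.
Proof. by rewrite /abar big_geq. Qed.

Lemma abarS (beta : nat -> R) t : abar beta t.+1 = abar beta t * (1 - beta t.+1).
Proof. by rewrite /abar big_nat_recr. Qed.

Lemma abar_bnd (beta : nat -> R) T :
  (forall t, (1 <= t <= T)%N -> 0 < beta t < 1) ->
  forall t, (t <= T)%N -> 0 < abar beta t <= 1.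
Proof.
move=> hb; elim=> [|t IH] ht; first by rewrite abar0 ltr01 lexx.
have /andP[b0 b1] := hb t.+1 ht.
have /andP[p0 p1] := IH (ltnW ht).
rewrite abarS; apply/andP; split.
  by rewrite mulr_gt0// subr_gt0.
by apply: mulr_ile1; lra.
Qed.

Lemma abar_lt1 (beta : nat -> R) T :
  (forall t, (1 <= t <= T)%N -> 0 < beta t < 1) ->
  forall t, (1 <= t <= T)%N -> abar beta t < 1.
Proof.
move=> hb [|t]// /andP[_ ht].
have /andP[b0 b1] := hb t.+1 ht.
have /andP[p0 p1] := (abar_bnd beta T hb t (ltnW ht)).
rewrite abarS; nra.
Qed.

End final.
Section step.
Context {R : realType}.
Variables (beta sigma : nat -> R) (d : nat) (y0 f : d.-tuple R).

Lemma card_step t (g : d.-tuple R -> \bar R) :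
  measurable_fun setT g -> (forall y, (0 <= g y)%E) ->
  0 < 1 - abar beta t -> 0 <= sigma t ->
  0 <= 1 - abar beta t.-1 - sigma t ^+ 2 ->
  gauss_int (card_mean beta y0 f t) (Num.sqrt (1 - abar beta t))
    (fun y => gauss_int (card_mu beta sigma y0 f t y) (sigma t) g)
  = gauss_int (card_mean beta y0 f t.-1) (Num.sqrt (1 - abar beta t.-1)) g.
Proof.
move=> mg g0 hs hsig hv.
set s := Num.sqrt (1 - abar beta t).
have s0 : s != 0 by rewrite gt_eqF// sqrtr_gt0.
set c := Num.sqrt (1 - abar beta t.-1 - sigma t ^+ 2).
rewrite /gauss_int.
transitivity (std_gauss_int (fun z : d.-tuple R => std_gauss_int (fun w : d.-tuple R =>
  g [tuple tnth (card_mean beta y0 f t.-1) i + c * tnth z i + sigma t * tnth w i | i < d]))).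
  apply: SG_ext => z; apply: SG_ext => w; congr g.
  apply: eq_from_tnth => i; rewrite [LHS]tnth_mktuple [RHS]tnth_mktuple /card_mu.
  rewrite [X in X + _]tnth_mktuple.
  rewrite [X in (X - _) / _]tnth_mktuple.
  by rewrite [X in X / _]addrAC subrr add0r mulrAC divff ?mul1r.
have c0 : 0 <= c by exact: sqrtr_ge0.
apply: eq_trans (@SG_conv R c (sigma t) c0 hsig d (fun i => tnth (card_mean beta y0 f t.-1) i) g mg g0) _.
apply: SG_ext => u; congr g; apply: eq_from_tnth => i; rewrite !tnth_mktuple.
by rewrite sqr_sqrtr// subrK.
Qed.

End step.
Section mainsec.
Context {R : realType}.
Variables (T d : nat) (beta sigma : nat -> R) (y0 f : d.-tuple R).
Hypothesis hbeta : forall t, (1 <= t <= T)%N -> 0 < beta t < 1.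
Hypothesis hsigma : forall t, (2 <= t <= T)%N -> 0 <= sigma t.
Hypothesis hvar : forall t, (2 <= t <= T)%N -> 0 <= 1 - abar beta t.-1 - sigma t ^+ 2.

Lemma measurable_inner t (g : d.-tuple R -> \bar R) :
  measurable_fun setT g -> (forall y, (0 <= g y)%E) ->
  measurable_fun setT (fun yt : d.-tuple R =>
    gauss_int (card_mu beta sigma y0 f t yt) (sigma t) g).
Proof.
move=> mg g0; rewrite /gauss_int.
apply: (@measurable_SG R d _ _ (fun yt w => g [tuple tnth (card_mu beta sigma y0 f t yt) i + sigma t * tnth w i | i < d])); last first.
  by move=> yt w; exact: g0.
apply: (measurableT_comp mg); apply: measurable_mktuple => i.
rewrite (_ : (fun x => _) = (fun p : d.-tuple R * d.-tuple R =>
   tnth (card_mean beta y0 f t.-1) i + Num.sqrt (1 - abar beta t.-1 - sigma t ^+ 2) *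
     ((tnth p.1 i - tnth (card_mean beta y0 f t) i) / Num.sqrt (1 - abar beta t)) +
   sigma t * tnth p.2 i)); last first.
  by apply/funext => p; rewrite /card_mu tnth_mktuple.
apply: measurable_funD; last first.
  by apply: measurable_funM => //; apply: mtn; exact: measurable_snd.
apply: measurable_funD => //; apply: measurable_funM => //.
apply: measurable_funM => //; apply: measurable_funB => //.
apply: mtn; exact: measurable_fst.
Qed.

Lemma marg_int k : (k <= T.-1)%N ->
  forall g : d.-tuple R -> \bar R, measurable_fun setT g -> (forall y, (0 <= g y)%E) ->
  card_marg_int beta sigma y0 f T k g =
  gauss_int (card_mean beta y0 f (T - k)) (Num.sqrt (1 - abar beta (T - k))) g.
Proof.
elim: k => [|k IH] hk g mg g0 /=; first by rewrite subn0.
have hk' : (k <= T.-1)%N by apply: ltnW.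
have ht : (2 <= T - k <= T)%N.
  by apply/andP; split; lia.
rewrite IH//; last 2 first.
- exact: measurable_inner.
- by move=> y; apply: SG_ge0 => w; exact: g0.
rewrite card_step//.
- by rewrite subnS.
- rewrite subr_gt0; apply: (@abar_lt1 R beta T hbeta).
  by case/andP: ht => h1 h2; apply/andP; split; lia.
- exact: hsigma.
- exact: hvar.
Qed.

End mainsec.

Theorem mainTheorem4 (R : realType) (T d : nat) (beta sigma : nat -> R)
  (y0 f : d.-tuple R)
  (hbeta : forall t, (1 <= t <= T)%N -> 0 < beta t < 1)
  (hsigma : forall t, (2 <= t <= T)%N -> 0 <= sigma t)
  (hvar : forall t, (2 <= t <= T)%N -> 0 <= 1 - abar beta t.-1 - sigma t ^+ 2) :
  forall t, (1 <= t <= T)%N ->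
  forall A : set (d.-tuple R), measurable A ->
    card_marg beta sigma y0 f T t A
    = gauss_prob (card_mean beta y0 f t) (Num.sqrt (1 - abar beta t)) A.
Proof.
move=> t /andP[t1 tT] A mA.
rewrite /card_marg /gauss_prob marg_int//.
- by rewrite subKn.
- lia.
- by apply/measurable_EFinP; exact: measurable_indic.
Qed.
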